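(* Let $\varepsilon,\delta>0$ and let $A\subseteq\mathbb{F}_2^n$ be nonempty. Let $m=\log_2|\mathrm{span}(A)|$ and $k=\lceil 2m/\varepsilon\rceil\cdot\lceil\log_2(1/\delta)\rceil$. If $v_1,\dots,v_k$ are independent uniformly random elements of $A$, then with probability at least $1-\delta$, $$|A\cap\mathrm{span}(\{v_1,\dots,v_k\})|\ge(1-\varepsilon)|A|.$$
   Context: $\mathrm{span}(S)$ denotes the $\mathbb{F}_2$-linear span of $S$. *)

(* Defs.v *)
From HB Require Import structures.
From mathcomp Require Import all_boot all_order all_algebra all_field.
From mathcomp Require Import reals exp.
Set Implicit Arguments. Unset Strict Implicit. Unset Printing Implicit Defensive.
Import Order.TTheory GRing.Theory Num.Theory.
Local Open Scope ring_scope.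

Definition log2 {R : realType} (x : R) : R := ln x / ln 2.

Definition spanset n (S : {set 'rV['F_2]_n}) : {set 'rV['F_2]_n} :=
  [set x | x \in <<enum S>>%VS].

(* the sample-size parameter k = ceil(2m/eps) * ceil(log2(1/delta)),
   with m = log2 |span A| (|span A| is a power of 2, so trunc_log is exact).
   ceil(2m/eps) >= 0 always; for delta > 1 the second factor is <= 0 and we
   take its absolute value (the statement is then trivial anyway). *)
Definition kparam {R : realType} n (A : {set 'rV['F_2]_n}) (eps delta : R) : nat :=
  let m := trunc_log 2 #|spanset A| in
  (`|Num.ceil (2 * m%:R / eps)| * `|Num.ceil (log2 (1 / delta))|)%N.

Definition good {R : realType} n (A : {set 'rV['F_2]_n}) (eps : R) k
    (v : {ffun 'I_k -> 'rV['F_2]_n}) : bool :=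
  (1 - eps) * #|A|%:R <= #|A :&: spanset [set v i | i : 'I_k]|%:R.

(* Main.v *)
Require Import Defs.
From HB Require Import structures.
From mathcomp Require Import all_boot all_order all_algebra all_field.
From mathcomp Require Import reals exp.
From mathcomp Require Import lra.
Import Order.TTheory GRing.Theory Num.Theory.
Local Open Scope ring_scope.

Lemma aux_ineq (R : realFieldType) (a c P d : R) : a + c = P -> c <= d * P -> (1 - d) * P <= a.
Proof. move=> h1 h2; nra. Qed.

Section Main.
Variable R : realType.
Variable n : nat.
Variable eps : R.
Variable A : {set 'rV['F_2]_n}.
Hypothesis eps0 : 0 < eps.
Hypothesis A0 : A != set0.
Local Notation V := 'rV['F_2]_n.

Definition S5 : {vspace V} := <<enum A>>%VS.

Definition badv (W : {vspace V}) : bool :=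
  #|A :&: [set x | x \in W]|%:R < (1 - eps) * #|A|%:R.

Definition cnt (U : {vspace V}) k : nat :=
  (\sum_(v : {ffun 'I_k -> V}) ([forall i, v i \in A] && badv (U + <<codom v>>)%VS))%N.

Definition consf k (a : V) (w : {ffun 'I_k -> V}) : {ffun 'I_k.+1 -> V} :=
  [ffun i => if unlift ord0 i is Some j then w j else a].
Arguments consf {k}.
Definition splitf k (v : {ffun 'I_k.+1 -> V}) : V * {ffun 'I_k -> V} :=
  (v ord0, [ffun j => v (lift ord0 j)]).

Arguments splitf {k}.
Lemma consf_bij k : bijective (fun p : V * {ffun 'I_k -> V} => consf p.1 p.2).
Proof.
exists (@splitf k).
- case=> a w /=; rewrite /splitf /consf ffunE unlift_none; congr pair.
  by apply/ffunP=> j; rewrite !ffunE liftK.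
- move=> v; apply/ffunP=> i; rewrite /consf /splitf ffunE /=.
  by case: unliftP => [j ->|->]; rewrite ?ffunE.
Qed.

Lemma codom_consf k a (w : {ffun 'I_k -> V}) : codom (consf a w) =i a :: codom w.
Proof.
move=> x; rewrite inE; apply/codomP/idP.
- case=> i ->; rewrite ffunE; case: unliftP => [j _| _]; rewrite ?eqxx //.
  by apply/orP; right; exact: codom_f.
- case/orP => [/eqP -> | /codomP [j ->]]; [exists ord0 | exists (lift ord0 j)];
  by rewrite ffunE ?unlift_none ?liftK.
Qed.

Lemma span_consf k a (w : {ffun 'I_k -> V}) :
  <<codom (consf a w)>>%VS = (<[a]> + <<codom w>>)%VS.
Proof. by rewrite -span_cons; apply: eq_span; exact: codom_consf. Qed.

Lemma all_consf k a (w : {ffun 'I_k -> V}) :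
  [forall i, consf a w i \in A] = (a \in A) && [forall j, w j \in A].
Proof.
apply/forallP/andP.
- move=> H; split; first by have := H ord0; rewrite ffunE unlift_none.
  by apply/forallP => j; have := H (lift ord0 j); rewrite ffunE liftK.
- by case=> aA /forallP wA i; rewrite ffunE; case: unliftP => [j _|_].
Qed.

Lemma cntS U k : cnt U k.+1 = (\sum_(a in A) cnt (U + <[a]>)%VS k)%N.
Proof.
rewrite /cnt (reindex (fun p : V * {ffun 'I_k -> V} => consf p.1 p.2)) /=; last first.
  by apply: onW_bij; apply: consf_bij.
rewrite -(pair_bigA _ (fun a w => ([forall i, consf a w i \in A] && badv (U + <<codom (consf a w)>>)%VS) : nat)) /=.
rewrite (bigID (mem A)) /= [X in (_ + X)%N]big1 ?addn0 => [|a aA]; last first.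
  by apply: big1 => w _; rewrite all_consf (negbTE aA).
apply: eq_bigr => a aA; apply: eq_bigr => w _.
by rewrite all_consf aA /= span_consf addvA.
Qed.

Definition gR U k : R := (cnt U k)%:R / (#|A| ^ k)%:R.

Lemma Apos : (0 < #|A|)%N.
Proof. by rewrite card_gt0. Qed.

Lemma ApR : 0 < #|A|%:R :> R.
Proof. by rewrite ltr0n Apos. Qed.

Lemma gRS U k : gR U k.+1 = (\sum_(a in A) gR (U + <[a]>)%VS k) / #|A|%:R.
Proof.
rewrite /gR cntS natr_sum -mulr_suml expnS natrM invfM.
by rewrite [_^-1 * _]mulrC mulrA.
Qed.

Lemma gR0 U : gR U 0 = (badv U)%:R.
Proof.
rewrite /gR expn0 divr1 /cnt (big_pred1 [ffun i : 'I_0 => (0%R : V)]); last first.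
  by move=> v /=; apply/esym/eqP/ffunP; case.
have -> : [forall i, [ffun i : 'I_0 => (0%R:V)] i \in A] = true by apply/forallP; case.
have -> : <<codom [ffun i : 'I_0 => (0%R:V)]>>%VS = 0%VS.
  by rewrite -span_nil; apply: eq_span => x; rewrite in_nil; apply/codomP; case; case.
by rewrite addv0.
Qed.

Lemma gR_ge0 U k : 0 <= gR U k.
Proof. by rewrite /gR divr_ge0. Qed.

Lemma badv_mono U W : (U <= W)%VS -> badv W -> badv U.
Proof.
rewrite /badv => UW; apply: le_lt_trans; rewrite ler_nat; apply: subset_leq_card.
by apply: setIS; apply/subsetP=> x; rewrite !inE => xU; exact: (subvP UW).
Qed.

Lemma gR_good U k : ~~ badv U -> gR U k = 0.
Proof.
move=> bU; rewrite /gR /cnt big1 ?mul0r // => v _.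
case: (badv _) / idP => [|//]; last by rewrite andbF.
by move/(badv_mono _ _ (addvSl _ _)); rewrite (negbTE bU).
Qed.

Lemma gR_le1 k U : gR U k <= 1.
Proof.
elim: k U => [|k IH] U; first by rewrite gR0; case: (badv U).
rewrite gRS ler_pdivrMr ?ApR // mul1r.
apply: (le_trans (y := \sum_(a in A) (1 : R))); first by apply: ler_sum.
by rewrite sumr_const.
Qed.

Lemma notbad U : (S5 <= U)%VS -> ~~ badv U.
Proof.
move=> SU; rewrite /badv -leNgt.
have -> : A :&: [set x | x \in U] = A.
  apply/setIidPl/subsetP => a aA; rewrite inE; apply: (subvP SU).
  by apply: memv_span; rewrite mem_enum.
apply: (le_trans (y := 1 * #|A|%:R)); last by rewrite mul1r.
apply: ler_wpM2r; [exact: ler0n | (have ? := eps0; lra)].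
Qed.

Definition dd U : R := (\dim (U + S5))%:R - (\dim U)%:R.

Lemma key j U : eps * j%:R * gR U j <= dd U.
Proof.
have dd0 W : 0 <= dd W by rewrite /dd subr_ge0 ler_nat dimvS // addvSl.
elim: j U => [|j IH] U; first by rewrite mulr0 mul0r.
case bU : (badv U); last by rewrite gR_good ?bU // mulr0.
set N : R := #|A|%:R.
have H1 a : a \in A -> eps * j%:R * gR (U + <[a]>)%VS j <= dd U - ((a \notin U) : nat)%:R.
  move=> aA; apply: (le_trans (IH _)); rewrite /dd.
  have -> : (U + <[a]> + S5 = U + S5)%VS.
    rewrite -addvA; congr (_ + _)%VS; apply/addv_idPr; rewrite -memvE.
    by apply: memv_span; rewrite mem_enum.
  have Hd : (\dim U + (a \notin U) <= \dim (U + <[a]>))%N.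
    case aU : (a \in U) => /=; first by rewrite addn0 dimvS // addvSl.
    rewrite addn1 (ltn_leqif (dimv_leqif_sup (addvSl U <[a]>))).
    apply/negP => /subvP /(_ a (subvP (addvSr U _) _ (memv_line a))).
    by rewrite aU.
  move: Hd; rewrite -(ler_nat R) natrD => Hd; (have ? := eps0; lra).
have H2 : \sum_(a in A) eps * gR (U + <[a]>)%VS j <= eps * N.
  rewrite /N -sumr_const mulr_sumr; apply: ler_sum => a _.
  by rewrite ler_pM2l // gR_le1.
have H3 : eps * N < \sum_(a in A) ((a \notin U) : nat)%:R.
  move: bU; rewrite /badv -/N -natr_sum.
  have -> : (\sum_(a in A) (a \notin U : nat))%N = #|A :\: [set x | x \in U]|.
    rewrite -big_mkcondr /= sum1dep_card; apply: eq_card => x.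
    by rewrite !inE andbC.
  move/eqP: (cardsID [set x | x \in U] A); rewrite -(eqr_nat R) natrD => /eqP.
  rewrite -/N => E; (have ? := eps0; lra).
rewrite gRS mulrA ler_pdivrMr ?ApR // mulr_sumr.
apply: (le_trans (y := \sum_(a in A) (eps * gR (U + <[a]>)%VS j + (dd U - ((a \notin U) : nat)%:R)))).
  apply: ler_sum => a aA; rewrite -addn1 natrD mulrDr mulr1 mulrDl addrC.
  by apply: lerD => //; apply: H1.
rewrite big_split /= sumrB sumr_const -/N -mulr_natr -/N; (have ? := eps0; lra).
Qed.

Lemma half s U : 2 * (\dim S5)%:R <= eps * s%:R -> gR U s <= 2^-1 * (badv U)%:R.
Proof.
move=> hs; case bU : (badv U); last by rewrite gR_good ?bU // mulr0.
rewrite mulr1.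
have K := key s U.
have D1 : 1 <= dd U.
  have : (\dim U < \dim (U + S5))%N.
    rewrite (ltn_leqif (dimv_leqif_sup (addvSl U S5))).
    apply/negP => H; have := notbad U (subv_trans (addvSr U S5) H).
    by rewrite bU.
  rewrite -(ler_nat R) -addn1 natrD /dd => h; have ? := eps0; lra.
have D2 : dd U <= (\dim S5)%:R.
  rewrite /dd; have := dimv_sum_cap U S5; move/eqP; rewrite -(eqr_nat R) !natrD => /eqP E.
  have := ler0n R (\dim (U :&: S5)) => ?; lra.
have G := gR_ge0 U s.
have h1 : 2 * (\dim S5)%:R * gR U s <= eps * s%:R * gR U s by apply: ler_wpM2r.
nra.
Qed.

Lemma block j2 c : (forall U, gR U j2 <= c * (badv U)%:R) ->
  forall j1 U, gR U (j1 + j2) <= c * gR U j1.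
Proof.
move=> H; elim=> [|j1 IH] U; first by rewrite add0n gR0.
rewrite addSn !gRS mulrA; apply: ler_wpM2r; first by rewrite invr_ge0 ler0n.
by rewrite mulr_sumr; apply: ler_sum => a _; exact: IH.
Qed.

Lemma iterb s t U : 2 * (\dim S5)%:R <= eps * s%:R ->
  gR U (t * s) <= (2^-1)^+t * (badv U)%:R.
Proof.
move=> hs; elim: t U => [|t IH] U; first by rewrite mul0n gR0 expr0 mul1r.
rewrite mulSn; apply: (le_trans (block _ _ IH s U)).
rewrite exprSr -mulrA; apply: ler_wpM2l; first by rewrite exprn_ge0 // invr_ge0.
exact: half.
Qed.

Lemma goodE k (v : {ffun 'I_k -> V}) : good A eps v = ~~ badv <<codom v>>%VS.
Proof.
rewrite /good /badv /spanset -leNgt.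
congr (_ <= _%:R); congr #|_|; congr (A :&: _); apply/setP => x; rewrite !inE.
suff -> : <<enum [set v i | i : 'I_k]>>%VS = <<codom v>>%VS by [].
apply: eq_span => y; rewrite mem_enum.
by apply/imsetP/codomP => [[i _ ->]|[i ->]]; exists i.
Qed.

Lemma final delta : 0 < delta -> let k := kparam A eps delta in
  1 - delta <= #|[set v : {ffun 'I_k -> V} | [forall i, v i \in A] && good A eps v]|%:R
                / (#|A| ^ k)%:R.
Proof.
move=> d0; cbv zeta; set k := kparam A eps delta.
have Hc : (#|[set v : {ffun 'I_k -> V} | [forall i, v i \in A] && good A eps v]|
            + cnt 0%VS k)%N = (#|A| ^ k)%N.
  rewrite -sum1dep_card big_mkcond /= /cnt -big_split /=.
  transitivity (\sum_(v : {ffun 'I_k -> V}) ([forall i, v i \in A] : nat))%N.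
    apply: eq_bigr => v _; rewrite add0v goodE.
    by case: [forall _, _]; case: badv.
  have -> : (#|A| ^ k = #|[set v : {ffun 'I_k -> V} | v \in ffun_on A]|)%N.
    by rewrite cardsE card_ffun_on card_ord.
  rewrite -sum1dep_card [RHS]big_mkcond /=; apply: eq_bigr => v _.
  have -> : (v \in ffun_on A) = [forall i, v i \in A] by apply/ffun_onP/forallP.
  by case: [forall _, _].
have P0 : 0 < (#|A| ^ k)%:R :> R by rewrite ltr0n expn_gt0 Apos.
have Hg : gR 0%VS k <= delta.
  have [d1|d1] := leP 1 delta; first exact: le_trans (gR_le1 _ _) d1.
  have Em : trunc_log 2 #|spanset A| = \dim S5.
    by rewrite /spanset cardsE card_vspace card_Fp // trunc_expnK.
  rewrite /k /kparam Em mulnC.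
  set s := `|Num.ceil (2 * (\dim S5)%:R / eps)|%N.
  set t := `|Num.ceil (log2 (1 / delta))|%N.
  have abs_ge (x : R) : x <= (`|Num.ceil x|%N)%:R.
    apply: (le_trans (ceil_ge x)); rewrite natr_absz ler_int; exact: ler_norm.
  have hs : 2 * (\dim S5)%:R <= eps * s%:R.
    by have := abs_ge (2 * (\dim S5)%:R / eps); rewrite ler_pdivrMr // [_ * eps]mulrC.
  apply: (le_trans (iterb s t 0%VS hs)).
  apply: (le_trans (y := (2^-1)^+t)).
    rewrite -[X in _ <= X]mulr1; apply: ler_wpM2l; first by rewrite exprn_ge0 // invr_ge0.
    by case: badv.
  have ht : log2 (1 / delta) <= t%:R by apply: abs_ge.
  have l2 : 0 < ln (2 : R) by apply: ln_gt0; rewrite ltr1n.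
  move: ht; rewrite /log2 ler_pdivrMr // mulr_natl -lnXn //.
  rewrite ler_ln ?posrE ?exprn_gt0 ?divr_gt0 // => ht.
  rewrite exprVn -div1r ler_pdivrMr ?exprn_gt0 //.
  by move: ht; rewrite ler_pdivrMr // mulrC.
move/eqP: Hc; rewrite -(eqr_nat R) natrD => /eqP Hc.
move: Hg; rewrite /gR ler_pdivrMr // => Hg.
rewrite ler_pdivlMr //; exact: aux_ineq Hc Hg.
Qed.
End Main.

(* v_1..v_k i.i.d. uniform on A: probability = (#good tuples in A^k) / |A|^k *)
Theorem lemma5p5 (R : realType) (n : nat) (eps delta : R)
    (A : {set 'rV['F_2]_n}) :
  0 < eps -> 0 < delta -> A != set0 ->
  let k := kparam A eps delta in
  1 - delta <=
    #|[set v : {ffun 'I_k -> 'rV['F_2]_n} |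
        [forall i, v i \in A] && good A eps v]|%:R / (#|A| ^ k)%:R.
Proof.
move=> e0 d0 A0; exact: (@final R n eps A e0 A0 delta d0).
Qed.
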